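(* Let $l\in\mathbb N_0$ and assume $x_1^{2l+1}\ne0$, $x_2^2\ne0$, $y_{l+1}\ne0$ in $\mathfrak B(V)$, and that $y_{l+1}y_l$ lies in the linear span of $\{y_ry_s:0\le r\le s\}$. Then $q_{11}^{l(l+1)}\widetilde q_{12}^{\,l+1}q_{22}=1$ and $y_{l+1}y_l=q_{11}^{l(l+1)}q_{12}^{l+1}q_{21}^{l}q_{22}\,y_ly_{l+1}$.
   Context: $\Bbbk$ algebraically closed of characteristic $0$. $V$ is braided of diagonal type with basis $x_1,x_2$, $c(x_i\otimes x_j)=q_{ij}x_j\otimes x_i$, $q_{ij}\in\Bbbk^\times$, $q_{ii}\ne1$, $\widetilde q_{12}=q_{12}q_{21}$; $\mathfrak B(V)$ is its Nichols algebra. $y_0=x_2$, $y_{k+1}=x_1y_k-q_{11}^kq_{12}y_kx_1$ (i.e. $y_k=(\mathrm{ad}_cx_1)^kx_2$). *)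

(* Defs.v *)
(* Rank-2 braided vector space of diagonal type, tensor
   algebra T(V) as formal linear combinations of words, Nichols algebra
   B(V) = T(V) / (direct sum of ker Omega_n), Omega_n the quantum symmetrizer. *)
From HB Require Import structures.
From mathcomp Require Import all_boot all_order all_algebra.
Set Implicit Arguments. Unset Strict Implicit. Unset Printing Implicit Defensive.
Import Order.TTheory GRing.Theory Num.Theory.
Local Open Scope ring_scope.

(* letters: x_1 is index i1, x_2 is index i2 *)
Definition i1 : 'I_2 := @Ordinal 2 0 isT.
Definition i2 : 'I_2 := @Ordinal 2 1 isT.

Definition word := seq 'I_2.

Section Tens.
Variable K : fieldType.

(* an element of T(V): a formal (finite) linear combination of words *)
Definition tens := seq (K * word).

Definition tcoef (u : tens) (w : word) : K := \sum_(t <- u | t.2 == w) t.1.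
Definition tadd (u v : tens) : tens := u ++ v.
Definition tscale (a : K) (u : tens) : tens := [seq (a * t.1, t.2) | t <- u].
Definition tsub (u v : tens) : tens := tadd u (tscale (-1) v).
Definition tmul (u v : tens) : tens :=
  [seq (s.1 * t.1, s.2 ++ t.2) | s <- u, t <- v].
Definition tletter (i : 'I_2) : tens := [:: (1, [:: i])].
Definition tpow (i : 'I_2) (n : nat) : tens := [:: (1, nseq n i)].
Definition tsum (s : seq tens) : tens := flatten s.

Variable q : 'I_2 -> 'I_2 -> K.   (* braiding matrix: c(x_i (x) x_j) = q i j x_j (x) x_i *)

Fixpoint ygen (k : nat) : tens :=
  match k with
  | 0 => tletter i2
  | k'.+1 => tsub (tmul (tletter i1) (ygen k'))
                  (tscale (q i1 i1 ^+ k' * q i1 i2) (tmul (ygen k') (tletter i1)))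
  end.

Definition remove_at (j : nat) (w : word) : word := take j w ++ drop j.+1 w.

(* braiding factor for moving the letter at position j of w to the end *)
Definition move_fac (j : nat) (w : word) : K :=
  \prod_(b <- drop j.+1 w) q (nth i1 w j) b.

(* quantum symmetrizer, via Omega_n = (Omega_{n-1} (x) id)(1 + c_{n-1} + ... + c_{n-1}...c_1) *)
Fixpoint omega_fuel (n : nat) (w : word) : tens :=
  match n with
  | 0 => [:: (1, [::])]
  | n'.+1 => tsum [seq tscale (move_fac j w)
                       (tmul (omega_fuel n' (remove_at j w)) (tletter (nth i1 w j)))
                  | j <- iota 0 (size w)]
  end.

Definition omega_word (w : word) : tens := omega_fuel (size w) w.

Definition omega (u : tens) : tens :=
  tsum [seq tscale t.1 (omega_word t.2) | t <- u].

(* u = 0 in the Nichols algebra B(V) *)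
Definition zeroB (u : tens) : Prop := forall w, tcoef (omega u) w = 0.
Definition eqB (u v : tens) : Prop := zeroB (tsub u v).

End Tens.

(* Main.v *)
Require Import Defs.
From HB Require Import structures.
From mathcomp Require Import all_boot all_order all_algebra zify ring.
Set Implicit Arguments. Unset Strict Implicit. Unset Printing Implicit Defensive.
Import GRing.Theory.
Local Open Scope ring_scope.

Section S.
Variable K : fieldType.
Variable q : 'I_2 -> 'I_2 -> K.

Definition ev (g : word -> K) (u : tens K) : K := \sum_(t <- u) t.1 * g t.2.

Lemma ev_ext g h u : (forall w, g w = h w) -> ev g u = ev h u.
Proof. by move=> E; apply: eq_bigr => t _; rewrite E. Qed.

Lemma ev_nil g : ev g [::] = 0.
Proof. by rewrite /ev big_nil. Qed.

Lemma ev_cat g u v : ev g (tadd u v) = ev g u + ev g v.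
Proof. by rewrite /ev /tadd big_cat. Qed.

Lemma ev_scale g a u : ev g (tscale a u) = a * ev g u.
Proof. by rewrite /ev /tscale big_map big_distrr; apply: eq_bigr => t _ /=; rewrite mulrA. Qed.

Lemma ev_sub g u v : ev g (tsub u v) = ev g u - ev g v.
Proof. by rewrite /tsub ev_cat ev_scale mulN1r. Qed.

Lemma ev_mul g u v : ev g (tmul u v) = ev (fun a => ev (fun b => g (a ++ b)) v) u.
Proof.
rewrite /ev /tmul big_allpairs_dep /=; apply: eq_bigr => s _.
rewrite big_distrr; apply: eq_bigr => t _ /=; by rewrite mulrA.
Qed.

Lemma ev_tsum g (s : seq (tens K)) : ev g (tsum s) = \sum_(u <- s) ev g u.
Proof.
elim: s => [|u s IH]; first by rewrite /tsum /= /ev !big_nil.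
by rewrite /tsum /= big_cons -IH -ev_cat.
Qed.

Lemma ev_letter g i : ev g (tletter K i) = g [:: i].
Proof. by rewrite /ev big_cons big_nil mul1r addr0. Qed.

Lemma ev_pow g i n : ev g (tpow K i n) = g (nseq n i).
Proof. by rewrite /ev big_cons big_nil mul1r addr0. Qed.

Lemma ev_lin g c u : ev (fun w => c * g w) u = c * ev g u.
Proof. by rewrite /ev big_distrr; apply: eq_bigr => t _; rewrite mulrCA. Qed.

Lemma ev_addf g h u : ev (fun w => g w + h w) u = ev g u + ev h u.
Proof. by rewrite /ev -big_split; apply: eq_bigr => t _; rewrite mulrDr. Qed.

Lemma ev_subf g h u : ev (fun w => g w - h w) u = ev g u - ev h u.
Proof. by rewrite /ev -sumrB; apply: eq_bigr => t _; rewrite mulrBr. Qed.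

Lemma ev_zerof u : ev (fun _ => 0) u = 0.
Proof. by rewrite /ev big1 // => t _; rewrite mulr0. Qed.

Lemma ev_swap (F : word -> word -> K) u v :
  ev (fun a => ev (fun b => F a b) v) u = ev (fun b => ev (fun a => F a b) u) v.
Proof.
rewrite /ev; under eq_bigr do rewrite big_distrr.
rewrite exchange_big; apply: eq_bigr => t _; rewrite big_distrr.
by apply: eq_bigr => s _ /=; rewrite mulrCA.
Qed.

Lemma tcoef_ev u w : tcoef u w = ev (fun w' => (w' == w)%:R) u.
Proof.
rewrite /tcoef /ev big_mkcond; apply: eq_bigr => t _.
by case: eqP => _; rewrite ?mulr1 ?mulr0.
Qed.

Definition supp (P : pred word) (u : tens K) :=
  forall g, (forall w, P w -> g w = 0) -> ev g u = 0.

Lemma supp_eq P u g h : supp P u -> (forall w, P w -> g w = h w) -> ev g u = ev h u.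
Proof.
move=> S E; apply/eqP; rewrite -subr_eq0 -ev_subf; apply/eqP/S => w Pw.
by rewrite E // subrr.
Qed.

Lemma supp_mul (P1 P2 P3 : pred word) u v : supp P1 u -> supp P2 v ->
  (forall a b, P1 a -> P2 b -> P3 (a ++ b)) -> supp P3 (tmul u v).
Proof.
move=> S1 S2 H g Hg; rewrite ev_mul; apply: S1 => a Pa; apply: S2 => b Pb.
exact/Hg/H.
Qed.

Lemma supp_sub P u v : supp P u -> supp P v -> supp P (tsub u v).
Proof. by move=> S1 S2 g Hg; rewrite ev_sub S1 // S2 // subrr. Qed.

Lemma supp_scale P a u : supp P u -> supp P (tscale a u).
Proof. by move=> S g Hg; rewrite ev_scale S // mulr0. Qed.

Lemma supp_letter i : supp (fun w => w == [:: i]) (tletter K i).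
Proof. by move=> g Hg; rewrite ev_letter; apply: Hg; rewrite /= eqxx. Qed.

Lemma supp_hom P u f c g : supp P u -> (forall w, P w -> f w = c) ->
  ev (fun w => f w * g w) u = c * ev g u.
Proof.
by move=> S E; rewrite -ev_lin; apply: (supp_eq S) => w Pw; rewrite E.
Qed.


Definition chi (i : 'I_2) (b : word) : K := \prod_(c <- b) q i c.

Definition Dg (i : 'I_2) (g : word -> K) (w : word) : K :=
  \sum_(j <- iota 0 (size w) | nth i1 w j == i) move_fac q j w * g (remove_at j w).

Lemma drop_cat_le (T : Type) n (s1 s2 : seq T) : (n <= size s1)%N ->
  drop n (s1 ++ s2) = drop n s1 ++ s2.
Proof.
move=> H; rewrite drop_cat; case: ltnP => // H2.
have -> : n = size s1 by apply/eqP; rewrite eqn_leq H H2.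
by rewrite subnn drop0 drop_size.
Qed.

Lemma drop_addn (T : Type) n (s1 s2 : seq T) : drop (size s1 + n) (s1 ++ s2) = drop n s2.
Proof. by elim: s1 => //= x s IH; rewrite ?addSn /= IH. Qed.
Lemma take_addn (T : Type) n (s1 s2 : seq T) : take (size s1 + n) (s1 ++ s2) = s1 ++ take n s2.
Proof. by elim: s1 => //= x s IH; rewrite ?addSn /= IH. Qed.
Lemma nth_addn (T : Type) x0 n (s1 s2 : seq T) : nth x0 (s1 ++ s2) (size s1 + n) = nth x0 s2 n.
Proof. by elim: s1 => //= x s IH. Qed.

Lemma Dg_cat i g a b : Dg i g (a ++ b) =
  Dg i (fun x => g (a ++ x)) b + chi i b * Dg i (fun x => g (x ++ b)) a.
Proof.
rewrite /Dg size_cat iotaD add0n big_cat addrC; congr (_ + _).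
  rewrite big_distrr big_mkcond [RHS]big_mkcond big_seq [RHS]big_seq.
  apply: eq_bigr => j; rewrite mem_iota add0n => /andP [_ Hj].
  rewrite nth_cat Hj.
  case: eqP => [Ei|_]; last by rewrite ?mulr0.
  rewrite /move_fac /remove_at nth_cat Hj drop_cat_le // big_cat /= take_cat Hj -catA.
  by rewrite /chi Ei mulrCA mulrA.
have -> : iota (size a) (size b) = map (addn (size a)) (iota 0 (size b)) by rewrite -iotaDl addn0.
rewrite big_map big_mkcond [RHS]big_mkcond big_seq [RHS]big_seq.
apply: eq_bigr => j; rewrite mem_iota add0n => /andP [_ Hj].
rewrite nth_cat ltnNge leq_addr /= addKn.
case: ifP => // _; congr (_ * _).
  by rewrite /move_fac -addnS drop_addn nth_addn.
by rewrite /remove_at -addnS drop_addn take_addn catA.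
Qed.

Lemma Dg_ev i (F : word -> word -> K) v w :
  Dg i (fun x => ev (fun b => F x b) v) w = ev (fun b => Dg i (fun x => F x b) w) v.
Proof.
rewrite /Dg /ev; under eq_bigr do rewrite big_distrr.
rewrite exchange_big; apply: eq_bigr => t _; rewrite big_distrr.
by apply: eq_bigr => j _ /=; rewrite mulrCA.
Qed.

Lemma Dg_ext i g h w : (forall x, g x = h x) -> Dg i g w = Dg i h w.
Proof. by move=> E; apply: eq_bigr => j _; rewrite E. Qed.

Lemma Dg_lin i c g w : Dg i (fun x => c * g x) w = c * Dg i g w.
Proof. by rewrite /Dg big_distrr; apply: eq_bigr => j _; rewrite mulrCA. Qed.

Lemma prod_nseq (F : 'I_2 -> K) n a : \prod_(x <- nseq n a) F x = F a ^+ n.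
Proof. by elim: n => [|n IH]; rewrite ?big_nil ?expr0 //= big_cons IH exprS. Qed.

Definition qint (x : K) (d : nat) : K := \sum_(j <- iota 0 d) x ^+ (d - j.+1).

Lemma Dg_nseq i g d c :
  Dg i g (nseq d c) = (c == i)%:R * qint (q c c) d * g (nseq d.-1 c).
Proof.
rewrite /Dg size_nseq big_mkcond /qint big_distrr big_distrl /= big_seq [RHS]big_seq.
apply: eq_bigr => j; rewrite mem_iota add0n => /andP [_ Hj].
rewrite nth_nseq Hj; case: eqP => _; rewrite ?mul0r ?mul1r //.
rewrite /move_fac nth_nseq Hj drop_nseq prod_nseq; congr (_ * g _).
rewrite /remove_at take_nseq ?drop_nseq -?nseqD; last exact: ltnW.
congr nseq; lia.
Qed.

Definition Om (w w' : word) : K := tcoef (omega_word q w') w.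

Lemma tcoef_mul_letter u c v i :
  tcoef (tmul u (tletter K c)) (rcons v i) = (c == i)%:R * tcoef u v.
Proof.
rewrite !tcoef_ev ev_mul -ev_lin; apply: ev_ext => a.
rewrite ev_letter cats1 eqseq_rcons.
by case: (a == v); case: (c == i); rewrite ?mulr1 ?mulr0.
Qed.

Lemma tcoef_mul_letter0 u c : tcoef (tmul u (tletter K c)) [::] = 0.
Proof.
rewrite !tcoef_ev ev_mul -(ev_zerof u); apply: ev_ext => a.
by rewrite ev_letter; case: a.
Qed.

Lemma size_remove_at j w : (j < size w)%N -> size (remove_at j w) = (size w).-1.
Proof.
move=> H; rewrite /remove_at size_cat size_take H size_drop; lia.
Qed.

Lemma omega_fuelS n w : omega_fuel q n.+1 w = tsum [seq tscale (move_fac q j w)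
                       (tmul (omega_fuel q n (remove_at j w)) (tletter K (nth i1 w j)))
                  | j <- iota 0 (size w)].
Proof. by []. Qed.

Lemma Om_nil w' : Om [::] w' = (w' == [::])%:R.
Proof.
case: w' => [|x s]; first by rewrite /Om /omega_word /= tcoef_ev /ev big_cons big_nil /= mul1r addr0.
rewrite /Om /omega_word omega_fuelS tcoef_ev ev_tsum big_map big1 // => j _.
by rewrite ev_scale -tcoef_ev tcoef_mul_letter0 mulr0.
Qed.

Lemma Om_rcons v i w' : Om (rcons v i) w' = Dg i (Om v) w'.
Proof.
case: w' => [|x s].
  rewrite /Om /omega_word /Dg /= big_nil tcoef_ev /ev big_cons big_nil /=.
  by case: v; rewrite /= mul1r addr0.
rewrite /Om /omega_word omega_fuelS /Dg tcoef_ev ev_tsum big_map [RHS]big_mkcond big_seq [RHS]big_seq.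
apply: eq_bigr => j; rewrite mem_iota add0n => /andP [_ Hj].
rewrite ev_scale -tcoef_ev tcoef_mul_letter.
rewrite size_remove_at //.
by case: eqP => _; rewrite ?mul1r ?mul0r ?mulr0.
Qed.


Lemma ord2 (c : 'I_2) : c = i1 \/ c = i2.
Proof. by case: c => [[|[|m]] Hc]; [left; exact: val_inj | right; exact: val_inj | ]. Qed.

Lemma chi_count i w : chi i w = q i i1 ^+ count_mem i1 w * q i i2 ^+ count_mem i2 w.
Proof.
elim: w => [|c w IH]; first by rewrite /chi big_nil !expr0 mulr1.
rewrite /chi big_cons -/(chi i w) IH /=.
by case: (ord2 c) => ->; rewrite /= ?add1n ?add0n ?exprS; ring.
Qed.

Lemma supp_weak (P P' : pred word) u : supp P u -> (forall w, P w -> P' w) -> supp P' u.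
Proof. by move=> S H g Hg; apply: S => w Pw; apply/Hg/H. Qed.

Definition Pk (k : nat) (w : word) : bool := (count_mem i1 w == k) && (count_mem i2 w == 1%N).

Lemma ygenS k : ygen q k.+1 = tsub (tmul (tletter K i1) (ygen q k))
                  (tscale (q i1 i1 ^+ k * q i1 i2) (tmul (ygen q k) (tletter K i1))).
Proof. by []. Qed.

Lemma ygen_supp k : supp (Pk k) (ygen q k).
Proof.
elim: k => [|k IH].
  apply: (@supp_weak (fun w => w == [:: i2]) (Pk 0) (tletter K i2)); first exact: (@supp_letter i2).
  by move=> w /eqP ->.
rewrite ygenS; apply: supp_sub.
  apply: (supp_mul (@supp_letter i1) IH) => a b /eqP -> /andP [/eqP E1 /eqP E2].
  by rewrite /Pk !count_cat E1 E2 /= eqxx !add0n.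
have H : forall a b, Pk k a -> (b == [:: i1]) -> Pk k.+1 (a ++ b).
  move=> a b /andP [/eqP E1 /eqP E2] /eqP ->.
  by rewrite /Pk !count_cat E1 E2 /= eqxx addn0 addn1 eqxx.
exact (supp_scale _ (supp_mul IH (@supp_letter i1) H)).
Qed.

Lemma chi_Pk i k w : Pk k w -> chi i w = q i i1 ^+ k * q i i2.
Proof. by move=> /andP [/eqP E1 /eqP E2]; rewrite chi_count E1 E2 expr1. Qed.

Lemma qint1 x : qint x 1 = 1.
Proof. by rewrite /qint /= big_cons big_nil expr0 addr0. Qed.

Lemma Dg_single i h c : Dg i h [:: c] = (c == i)%:R * h [::].
Proof. by rewrite (Dg_nseq i h 1 c) qint1 mulr1. Qed.

Fixpoint mu (k : nat) : K :=
  if k is k'.+1 then mu k' * (1 - q i1 i1 ^+ k' * q i1 i2 * q i2 i1) else 1.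

Lemma Ystep i g k : ev (Dg i g) (ygen q k.+1) =
  ev (Dg i (fun x => g (i1 :: x))) (ygen q k)
  + (q i i1 ^+ k * q i i2) * ((i1 == i)%:R * ev g (ygen q k))
  - (q i1 i1 ^+ k * q i1 i2) *
    ((i1 == i)%:R * ev g (ygen q k) + q i i1 * ev (Dg i (fun x => g (x ++ [:: i1]))) (ygen q k)).
Proof.
rewrite ygenS ev_sub ev_scale !ev_mul ev_letter; congr (_ - _ * _).
  rewrite (ev_ext _ (fun b => Dg_cat i g [:: i1] b)) ev_addf; congr (_ + _).
  rewrite (supp_hom _ (@ygen_supp k) (fun w Pw => chi_Pk i Pw)); congr (_ * _).
  by rewrite -ev_lin; apply: ev_ext => b; rewrite Dg_single.
rewrite (ev_ext _ (fun a => ev_letter _ _)).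
rewrite (ev_ext _ (fun a => Dg_cat i g a [:: i1])) ev_addf; congr (_ + _).
  by rewrite -ev_lin; apply: ev_ext => a; rewrite Dg_single cats0.
by rewrite -ev_lin; apply: ev_ext => a; rewrite /chi big_cons big_nil mulr1.
Qed.

Lemma Y12 k : (forall g, ev (Dg i1 g) (ygen q k) = 0) /\
              (forall g, ev (Dg i2 g) (ygen q k) = mu k * g (nseq k i1)).
Proof.
elim: k => [|k [IH1 IH2]].
  by split => g; rewrite ev_letter Dg_single /= ?mul0r ?mul1r.
split => g; rewrite Ystep.
  by rewrite IH1 IH1 mulr0 addr0 mul1r add0r /=; ring.
rewrite IH2 IH2 /=.
have -> : nseq k i1 ++ [:: i1] = i1 :: nseq k i1.
  by elim: k {IH1 IH2} => //= k ->.
ring.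
Qed.

Lemma Y1 k g : ev (Dg i1 g) (ygen q k) = 0.
Proof. by case: (Y12 k) => H _; apply: H. Qed.
Lemma Y2 k g : ev (Dg i2 g) (ygen q k) = mu k * g (nseq k i1).
Proof. by case: (Y12 k) => _ H; apply: H. Qed.


Lemma nseq_rcons (T : Type) (x : T) k : nseq k x ++ [:: x] = nseq k.+1 x.
Proof. by elim: k => //= k ->. Qed.

Lemma Om_iter v j w' : Om (v ++ nseq j i1) w' = iter j (Dg i1) (Om v) w'.
Proof.
elim: j w' => [|j IH] w'; first by rewrite cats0.
rewrite -nseq_rcons catA cats1 Om_rcons iterS; exact: Dg_ext.
Qed.

Fixpoint qfact (x : K) (m : nat) : K :=
  if m is m'.+1 then qint x m * qfact x m' else 1.

Lemma qint0 x : qint x 0 = 0.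
Proof. by rewrite /qint big_nil. Qed.

Lemma Om_pow c m k : Om (nseq m c) (nseq k c) = (m == k)%:R * qfact (q c c) m.
Proof.
elim: m k => [|m IH] k.
  by rewrite Om_nil; case: k => [|k] /=; rewrite ?mul1r ?mul0r.
rewrite -nseq_rcons cats1 Om_rcons Dg_nseq eqxx mul1r IH.
case: k => [|k] /=; first by rewrite qint0 !mul0r.
by rewrite eqSS; case: eqP => [->|_]; rewrite ?mul0r ?mulr0 ?mul1r.
Qed.

Lemma perm_remove j w : (j < size w)%N -> perm_eq (rcons (remove_at j w) (nth i1 w j)) w.
Proof.
move=> H; rewrite perm_rcons /remove_at.
have Ew : w = take j w ++ nth i1 w j :: drop j.+1 w by rewrite -drop_nth // cat_take_drop.
rewrite [X in perm_eq _ X]Ew.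
by apply/permP => P; rewrite /= !count_cat /= addnCA.
Qed.

Lemma Om_perm w w' : Om w w' != 0 -> perm_eq w w'.
Proof.
elim/last_ind: w w' => [|v i IH] w'.
  by rewrite Om_nil; case: w' => //= x s; rewrite eqxx.
apply: contraR => Hn; rewrite Om_rcons /Dg big_seq_cond big1 // => j.
rewrite mem_iota add0n => /andP [/andP [_ Hj] /eqP Ei].
case: (Om v (remove_at j w') =P 0) => [->|/eqP Hne]; first by rewrite mulr0.
exfalso; move/negP: Hn; apply.
apply: (perm_trans _ (perm_remove Hj)); rewrite Ei perm_rcons perm_sym perm_rcons perm_cons perm_sym.
exact: IH.
Qed.

Fixpoint ff (b j : nat) : K :=
  if j is j'.+1 then ff b j' * qint (q i1 i1) (b - j') else 1.

Notation Y k := (ygen q k).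

Lemma A1 G a b : ev (Dg i2 G) (tmul (Y a) (Y b)) =
  mu b * ev (fun x => G (x ++ nseq b i1)) (Y a)
  + q i2 i1 ^+ b * q i2 i2 * (mu a * ev (fun y => G (nseq a i1 ++ y)) (Y b)).
Proof.
have E x : ev (fun y => Dg i2 G (x ++ y)) (Y b) = mu b * G (x ++ nseq b i1)
   + q i2 i1 ^+ b * q i2 i2 * ev (fun y => Dg i2 (fun z => G (z ++ y)) x) (Y b).
  rewrite (ev_ext _ (fun y => Dg_cat i2 G x y)) ev_addf Y2.
  by rewrite (supp_hom _ (@ygen_supp b) (fun w Pw => chi_Pk i2 Pw)).
rewrite ev_mul (ev_ext _ E) ev_addf !ev_lin ev_swap; congr (_ + _ * _).
by rewrite -ev_lin; apply: ev_ext => y; rewrite Y2.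
Qed.

Lemma A2a G a d : ev (fun x => Dg i1 G (x ++ nseq d i1)) (Y a) =
  qint (q i1 i1) d * ev (fun x => G (x ++ nseq d.-1 i1)) (Y a).
Proof.
rewrite (ev_ext _ (fun x => Dg_cat i1 G x (nseq d i1))) ev_addf ev_lin Y1 mulr0 addr0.
by rewrite -ev_lin; apply: ev_ext => x; rewrite Dg_nseq eqxx mul1r.
Qed.

Lemma A2 G a c j : ev (fun x => iter j (Dg i1) G (x ++ nseq c i1)) (Y a) =
  ff c j * ev (fun x => G (x ++ nseq (c - j) i1)) (Y a).
Proof.
elim: j G => [|j IH] G; first by rewrite /= mul1r subn0.
rewrite (ev_ext _ (fun x => congr1 (fun f => f (x ++ nseq c i1)) (iterSr j (Dg i1) G))).
by rewrite IH A2a -subnS /= mulrA.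
Qed.

Lemma A3a G b d : ev (fun y => Dg i1 G (nseq d i1 ++ y)) (Y b) =
  (q i1 i1 ^+ b * q i1 i2) * (qint (q i1 i1) d * ev (fun y => G (nseq d.-1 i1 ++ y)) (Y b)).
Proof.
rewrite (ev_ext _ (fun y => Dg_cat i1 G (nseq d i1) y)) ev_addf Y1 add0r.
rewrite (supp_hom _ (@ygen_supp b) (fun w Pw => chi_Pk i1 Pw)); congr (_ * _).
by rewrite -ev_lin; apply: ev_ext => y; rewrite Dg_nseq eqxx mul1r.
Qed.

Lemma A3 G b c j : ev (fun y => iter j (Dg i1) G (nseq c i1 ++ y)) (Y b) =
  (q i1 i1 ^+ b * q i1 i2) ^+ j * ff c j * ev (fun y => G (nseq (c - j) i1 ++ y)) (Y b).
Proof.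
elim: j G => [|j IH] G; first by rewrite /= expr0 !mul1r subn0.
rewrite (ev_ext _ (fun y => congr1 (fun f => f (nseq c i1 ++ y)) (iterSr j (Dg i1) G))).
rewrite IH A3a -subnS /= exprS; ring.
Qed.

Lemma chi_nseq i d : chi i (nseq d i1) = q i i1 ^+ d.
Proof. exact: prod_nseq. Qed.

Lemma A4 G a c : ev (fun x => Dg i2 G (x ++ nseq c i1)) (Y a) =
  q i2 i1 ^+ c * (mu a * G (nseq a i1 ++ nseq c i1)).
Proof.
rewrite (ev_ext _ (fun x => Dg_cat i2 G x (nseq c i1))) ev_addf ev_lin Y2 chi_nseq.
have -> : ev (fun x => Dg i2 (fun y => G (x ++ y)) (nseq c i1)) (Y a) = 0.
  by rewrite -(ev_zerof (Y a)); apply: ev_ext => x; rewrite Dg_nseq /= !mul0r.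
by rewrite add0r.
Qed.

Lemma A5 G b c : ev (fun y => Dg i2 G (nseq c i1 ++ y)) (Y b) =
  mu b * G (nseq c i1 ++ nseq b i1).
Proof.
rewrite (ev_ext _ (fun y => Dg_cat i2 G (nseq c i1) y)) ev_addf Y2.
have -> : ev (fun y => chi i2 y * Dg i2 (fun x => G (x ++ y)) (nseq c i1)) (Y b) = 0.
  by rewrite -(ev_zerof (Y b)); apply: ev_ext => y; rewrite Dg_nseq /= !mul0r mulr0.
by rewrite addr0.
Qed.

Lemma VPhi G a b j : ev (Dg i2 (iter j (Dg i1) (Dg i2 G))) (tmul (Y a) (Y b)) =
  mu b * (ff b j * (q i2 i1 ^+ (b - j) * (mu a * G (nseq a i1 ++ nseq (b - j) i1))))
  + q i2 i1 ^+ b * q i2 i2 * (mu a * ((q i1 i1 ^+ b * q i1 i2) ^+ j * ff a j *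
      (mu b * G (nseq (a - j) i1 ++ nseq b i1)))).
Proof. by rewrite A1 A2 A3 A4 A5. Qed.


Lemma zeroB_ev u : zeroB q u <-> forall w, ev (Om w) u = 0.
Proof.
have E w : tcoef (omega q u) w = ev (Om w) u.
  rewrite tcoef_ev /omega ev_tsum big_map; apply: eq_bigr => t _.
  by rewrite ev_scale -tcoef_ev.
by split => H w; [rewrite -E; apply: H | rewrite E; apply: H].
Qed.

Lemma Om_count w w' : Om w w' != 0 -> count_mem i1 w = count_mem i1 w'.
Proof. by move/Om_perm/permP; apply. Qed.

Lemma deg_zero w a b : count_mem i1 w != (a + b)%N -> ev (Om w) (tmul (Y a) (Y b)) = 0.
Proof.
move=> Hw.
have S : supp (fun w' => count_mem i1 w' == (a + b)%N) (tmul (Y a) (Y b)).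
  apply: (supp_mul (@ygen_supp a) (@ygen_supp b)) => x y /andP [/eqP E1 _] /andP [/eqP E2 _].
  by rewrite count_cat E1 E2.
apply: S => w' /eqP Hw'; apply/eqP; apply: contraR Hw => /Om_count ->.
by rewrite Hw'.
Qed.

Lemma Om_nil_supp P u : supp P u -> (forall w, P w -> w != [::]) -> ev (Om [::]) u = 0.
Proof.
by move=> S H; apply: S => w Pw; rewrite Om_nil; move/negPf: (H w Pw) => ->.
Qed.

Lemma Pk_nil k w : Pk k w -> w != [::].
Proof. by case: w => // /andP [_]. Qed.

Lemma ev_mul_pow g c v : ev g (tmul (tpow K i1 c) v) = ev (fun y => g (nseq c i1 ++ y)) v.
Proof. by rewrite ev_mul ev_pow. Qed.

Lemma Zinner s : mu s = 0 -> forall w c, ev (Om w) (tmul (tpow K i1 c) (Y s)) = 0.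
Proof.
move=> Hmu; elim/last_ind => [|v i IH] c.
  rewrite ev_mul_pow; apply: (@ygen_supp s) => w Pw; rewrite Om_nil.
  by case: c => [|c] /=; [move/negPf: (Pk_nil Pw) => ->|].
rewrite (ev_ext _ (Om_rcons v i)) ev_mul_pow.
case: (ord2 i) => ->.
  by rewrite A3a -ev_mul_pow IH !mulr0.
by rewrite A5 Hmu mul0r.
Qed.


Lemma B1 G a b : ev (Dg i1 G) (tmul (Y a) (Y b)) = 0.
Proof.
rewrite ev_mul (ev_ext _ (fun x => ev_ext _ (fun y => Dg_cat i1 G x y))).
rewrite (ev_ext _ (fun x => ev_addf _ _ _)) ev_addf.
rewrite (ev_ext _ (fun x => Y1 _ _)) ev_zerof add0r ev_swap.
rewrite -(ev_zerof (Y b)); apply: ev_ext => y.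
by rewrite ev_lin Y1 mulr0.
Qed.

Lemma Zys r s : mu s = 0 -> forall w, ev (Om w) (tmul (Y r) (Y s)) = 0.
Proof.
move=> Hmu; case/lastP => [|v i].
  apply: (Om_nil_supp (P := fun w' => count_mem i2 w' == 2%N)).
    apply: (supp_mul (@ygen_supp r) (@ygen_supp s)) => x y /andP [_ /eqP E1] /andP [_ /eqP E2].
    by rewrite count_cat E1 E2.
  by case.
rewrite (ev_ext _ (Om_rcons v i)); case: (ord2 i) => ->; first exact: B1.
by rewrite A1 Hmu mul0r add0r -ev_mul_pow Zinner // !mulr0.
Qed.

Lemma mu_mono a b : mu a = 0 -> (a <= b)%N -> mu b = 0.
Proof.
move=> H; elim: b => [|b IH]; first by rewrite leqn0 => /eqP <-.
rewrite leq_eqVlt => /orP [/eqP <- //|]; rewrite ltnS => /IH /= ->.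
by rewrite mul0r.
Qed.

Lemma hy_mu k : ~ zeroB q (Y k) -> mu k != 0.
Proof.
move=> H; apply/eqP => Hm; apply: H; apply/zeroB_ev; case/lastP => [|v i].
  exact: (Om_nil_supp (@ygen_supp k) (@Pk_nil k)).
rewrite (ev_ext _ (Om_rcons v i)); case: (ord2 i) => ->; first exact: Y1.
by rewrite Y2 Hm mul0r.
Qed.

Lemma perm_nseq (w : word) n c : perm_eq w (nseq n c) -> w = nseq n c.
Proof.
move=> H; have Hs := perm_size H; rewrite size_nseq in Hs.
have : all (pred1 c) w by rewrite (perm_all _ H) all_pred1_nseq.
by move/all_pred1P; rewrite Hs.
Qed.

Lemma hx_fact c m : ~ zeroB q (tpow K c m) -> qfact (q c c) m != 0.
Proof.
move=> H; apply/eqP => Hf; apply: H; apply/zeroB_ev => w; rewrite ev_pow.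
case: (Om w (nseq m c) =P 0) => // /eqP /Om_perm /perm_nseq ->.
by rewrite Om_pow eqxx Hf mulr0.
Qed.

Lemma qfact_le x n k : qfact x n != 0 -> (k <= n)%N -> qfact x k != 0.
Proof.
elim: n => [|n IH] H; first by rewrite leqn0 => /eqP ->.
rewrite leq_eqVlt => /orP [/eqP -> //|]; rewrite ltnS; apply: IH.
by move: H => /=; rewrite mulf_eq0 negb_or => /andP [].
Qed.

Lemma qint_nz x n k : qfact x n != 0 -> (0 < k)%N -> (k <= n)%N -> qint x k != 0.
Proof.
move=> H Hk Hkn; have := qfact_le H Hkn.
by case: k Hk {Hkn} => // k _ /=; rewrite mulf_eq0 negb_or => /andP [].
Qed.

Lemma ff_zero b j : (b < j)%N -> ff b j = 0.
Proof.
elim: j => // j IH; rewrite ltnS leq_eqVlt => /orP [/eqP ->|/IH /= ->]; last by rewrite mul0r.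
by rewrite /= subnn qint0 mulr0.
Qed.

Lemma ff_nz n b j : qfact (q i1 i1) n != 0 -> (j <= b)%N -> (b <= n)%N -> ff b j != 0.
Proof.
move=> H; elim: j => [|j IH] Hj Hb /=; first exact: oner_neq0.
rewrite mulf_neq0 //.
  by apply: IH => //; apply: ltnW.
apply: (qint_nz H); lia.
Qed.

Lemma iter_ext j f g w : (forall x, f x = g x) -> iter j (Dg i1) f w = iter j (Dg i1) g w.
Proof.
elim: j w => // j IH w E /=; apply: Dg_ext => x; exact: IH.
Qed.

Definition wj (n j : nat) : word := rcons (rcons (nseq (n - j) i1) i2 ++ nseq j i1) i2.

Lemma Om_wj n j w' : Om (wj n j) w' =
  Dg i2 (iter j (Dg i1) (Dg i2 (Om (nseq (n - j) i1)))) w'.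
Proof.
rewrite /wj Om_rcons; apply: Dg_ext => x; rewrite Om_iter.
apply: iter_ext => y; exact: Om_rcons.
Qed.

Lemma count_wj n j : (j <= n)%N -> count_mem i1 (wj n j) = n.
Proof.
move=> H; rewrite /wj -!cats1 !count_cat /= !count_nseq /=; lia.
Qed.

Definition Phi (j a b : nat) : K := mu a * mu b *
  (ff b j * q i2 i1 ^+ (b - j) + q i2 i2 * q i2 i1 ^+ b * (q i1 i1 ^+ b * q i1 i2) ^+ j * ff a j).

Lemma Vj n j a b : (j <= n)%N -> (a + b)%N = n ->
  ev (Om (wj n j)) (tmul (Y a) (Y b)) = qfact (q i1 i1) (n - j) * Phi j a b.
Proof.
move=> Hj Hab; rewrite (ev_ext _ (Om_wj n j)) VPhi.
set G := Om (nseq (n - j) i1).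
have T1 : ff b j * G (nseq a i1 ++ nseq (b - j) i1) = ff b j * qfact (q i1 i1) (n - j).
  case: (leqP j b) => h; last by rewrite ff_zero // !mul0r.
  rewrite /G -nseqD Om_pow; have -> : (n - j == a + (b - j))%N by apply/eqP; lia.
  by rewrite mul1r.
have T2 : ff a j * G (nseq (a - j) i1 ++ nseq b i1) = ff a j * qfact (q i1 i1) (n - j).
  case: (leqP j a) => h; last by rewrite ff_zero // !mul0r.
  rewrite /G -nseqD Om_pow; have -> : (n - j == a - j + b)%N by apply/eqP; lia.
  by rewrite mul1r.
rewrite /Phi.
have -> : forall (A B C D E F H I J: K), A * (B * (C * (D * E))) + F * (D * (H * I * (A * J)))
   = (B * E) * (A * C * D) + (I * J) * (F * D * H * A) by move=> *; ring.
rewrite T1 T2; ring.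
Qed.

End S.

Unset Implicit Arguments.
Theorem lemma4 (K : closedFieldType) (hchar : [pchar K] =i pred0)
  (q : 'I_2 -> 'I_2 -> K) (hq0 : forall i j, q i j != 0)
  (hq1 : forall i, q i i != 1) (l : nat)
  (hx1 : ~ zeroB q (tpow K i1 (2 * l + 1)))
  (hx2 : ~ zeroB q (tpow K i2 2))
  (hy : ~ zeroB q (ygen q l.+1))
  (hspan : exists (N : nat) (c : nat -> nat -> K),
      eqB q (tmul (ygen q l.+1) (ygen q l))
        (tsum [seq tscale (c rs.1 rs.2) (tmul (ygen q rs.1) (ygen q rs.2))
              | rs <- [seq (r, s) | r <- iota 0 N, s <- iota 0 N] & rs.1 <= rs.2]%N)) :
  q i1 i1 ^+ (l * l.+1) * (q i1 i2 * q i2 i1) ^+ l.+1 * q i2 i2 = 1 /\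
  eqB q (tmul (ygen q l.+1) (ygen q l))
    (tscale (q i1 i1 ^+ (l * l.+1) * q i1 i2 ^+ l.+1 * q i2 i1 ^+ l * q i2 i2)
            (tmul (ygen q l) (ygen q l.+1))).
Proof.
pose n := (2 * l + 1)%N.
have hF : qfact (q i1 i1) n != 0 := hx_fact hx1.
have hp : q i2 i2 + 1 != 0.
  have := hx_fact hx2; rewrite /= qint1 mulr1 /qint /= !big_cons big_nil expr1 expr0 addr0.
  by rewrite mulr1.
have hmu : forall r, (r <= l.+1)%N -> mu q r != 0.
  move=> r Hr; apply/eqP => H0; move: (hy_mu hy); by rewrite (mu_mono H0 Hr) eqxx.
have hq21 : q i2 i1 != 0 := hq0 _ _.
case: hspan => N [c hE].
set L := filter _ _ in hE.
have HE : forall w, ev (Om q w) (tmul (ygen q l.+1) (ygen q l)) =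
    \sum_(x <- L) c x.1 x.2 * ev (Om q w) (tmul (ygen q x.1) (ygen q x.2)).
  move=> w; move/zeroB_ev: hE => /(_ w); rewrite ev_sub ev_tsum big_map.
  under eq_bigr do rewrite ev_scale.
  by move/eqP; rewrite subr_eq0 => /eqP.
pose C r := \sum_(x <- L | (x.1 == r) && (x.1 + x.2 == n)%N) c x.1 x.2.
have HS : forall w, count_mem i1 w = n ->
  ev (Om q w) (tmul (ygen q l.+1) (ygen q l)) =
  \sum_(r <- iota 0 l.+1) C r * ev (Om q w) (tmul (ygen q r) (ygen q (n - r))).
  move=> w Hw; rewrite HE.
  transitivity (\sum_(x <- L) (if (x.1 + x.2 == n)%N then
      c x.1 x.2 * ev (Om q w) (tmul (ygen q x.1) (ygen q (n - x.1))) else 0)).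
    apply: eq_bigr => x _; case: eqP => [Hs|Hs].
      by rewrite -Hs addKn.
    rewrite deg_zero ?mulr0 // Hw; apply/eqP => E; exact: Hs (esym E).
  rewrite /C; under [RHS]eq_bigr do rewrite big_distrl /=.
  under [RHS]eq_bigr do rewrite big_mkcond /=.
  rewrite [RHS]exchange_big /=.
  apply: eq_big_seq => x Hx.
  case Hs: (x.1 + x.2 == n)%N; last by rewrite big1 // => r _; rewrite andbF.
  have Hx1 : x.1 \in iota 0 l.+1.
    move: Hx; rewrite mem_filter => /andP [Hle _]; move/eqP: Hs; rewrite /n mem_iota /=; move: Hle => /= Hle; lia.
  rewrite (bigD1_seq x.1 Hx1 (iota_uniq _ _)) eqxx andbT /= big1 ?addr0 // => r.
  by rewrite eq_sym => /negPf ->.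
have EQ : forall j, (j <= n)%N ->
    Phi q j l.+1 l = \sum_(r <- iota 0 l.+1) C r * Phi q j r (n - r).
  move=> j Hj; have := HS (wj n j) (count_wj Hj).
  rewrite Vj //; last by rewrite /n; lia.
  have E2 : \sum_(r <- iota 0 l.+1) C r * ev (Om q (wj n j)) (tmul (ygen q r) (ygen q (n - r)))
     = \sum_(r <- iota 0 l.+1) C r * (qfact (q i1 i1) (n - j) * Phi q j r (n - r)).
    apply: eq_big_seq => r; rewrite mem_iota => /andP [_ Hr]; rewrite Vj //.
    rewrite /n; lia.
  rewrite E2.
  have Hf : qfact (q i1 i1) (n - j) != 0 := qfact_le hF (leq_subr j n).
  under eq_bigr do rewrite mulrCA.
  by rewrite -big_distrr /= => /(mulfI Hf).
have S5 : forall r0, (r0 < l)%N -> C r0 * mu q (n - r0) = 0.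
  elim/ltn_ind => r0 IH Hr0.
  have Z1 : ff q l (n - r0) = 0 by apply: ff_zero; rewrite /n; lia.
  have Z2 : ff q l.+1 (n - r0) = 0 by apply: ff_zero; rewrite /n; lia.
  have Z3 : ff q r0 (n - r0) = 0 by apply: ff_zero; rewrite /n; lia.
  have := EQ (n - r0)%N (leq_subr _ _).
  have -> : Phi q (n - r0) l.+1 l = 0 by rewrite /Phi Z1 Z2; ring.
  have Hr0i : r0 \in iota 0 l.+1 by rewrite mem_iota; lia.
  rewrite (bigD1_seq r0 Hr0i (iota_uniq _ _)) big1_seq ?addr0; last first.
    move=> r /andP [Hne Hin]; move: Hin; rewrite mem_iota => /andP [_ Hr].
    case: (ltngtP r r0) => Hrr; last by rewrite Hrr eqxx in Hne.
      transitivity ((C r * mu q (n - r)) * (mu q r * (ff q (n - r) (n - r0) * q i2 i1 ^+ (n - r - (n - r0)) + q i2 i2 * q i2 i1 ^+ (n - r) * (q i1 i1 ^+ (n - r) * q i1 i2) ^+ (n - r0) * ff q r (n - r0)))); first by rewrite /Phi; ring.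
      by rewrite IH ?mul0r //; lia.
    have Z5 : ff q (n - r) (n - r0) = 0 by apply: ff_zero; rewrite /n; lia.
    have Z6 : ff q r (n - r0) = 0 by apply: ff_zero; rewrite /n; lia.
    by rewrite /Phi Z5 Z6; ring.
  move=> H; have {}H : 0 = C r0 * Phi q (n - r0)%N r0 (n - r0)%N by rewrite H; exact: addr0.
  have Hff : ff q (n - r0) (n - r0) != 0 := ff_nz hF (leqnn _) (leq_subr _ _).
  have Hm : mu q r0 != 0 by apply: hmu; lia.
  have H2 : (C r0 * mu q (n - r0)) * (mu q r0 * ff q (n - r0) (n - r0)) = C r0 * Phi q (n - r0) r0 (n - r0).
    by rewrite /Phi subnn expr0 Z3; ring.
  by move: H2; rewrite -H => /eqP; rewrite mulf_eq0 (negPf (mulf_neq0 Hm Hff)) orbF => /eqP.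
have Hiota : iota 0 l.+1 = iota 0 l ++ [:: l] by rewrite -addn1 iotaD.
have Hnl : (n - l)%N = l.+1 by rewrite /n; lia.
have SUM : forall j, \sum_(r <- iota 0 l.+1) C r * Phi q j r (n - r) = C l * Phi q j l l.+1.
  move=> j; rewrite Hiota big_cat /= big_seq1 Hnl.
  rewrite big1_seq ?add0r // => r /andP [_ Hin]; move: Hin; rewrite mem_iota => /andP [_ Hr].
  transitivity ((C r * mu q (n - r)) * (mu q r * (ff q (n - r) j * q i2 i1 ^+ (n - r - j) + q i2 i2 * q i2 i1 ^+ (n - r) * (q i1 i1 ^+ (n - r) * q i1 i2) ^+ j * ff q r j))); first by rewrite /Phi; ring.
  by rewrite S5 ?mul0r.
have E6 := EQ l.+1 (ltac:(rewrite /n; lia)); rewrite SUM in E6.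
have Z4 : ff q l l.+1 = 0 by apply: ff_zero.
have Hf1 : ff q l.+1 l.+1 != 0 by apply: (ff_nz hF (leqnn _)); rewrite /n; lia.
have Hml : mu q l != 0 by apply: hmu.
have Hml1 : mu q l.+1 != 0 by apply: hmu.
have H6 : (q i2 i2 * q i2 i1 ^+ l * (q i1 i1 ^+ l * q i1 i2) ^+ l.+1) * (mu q l.+1 * mu q l * ff q l.+1 l.+1)
    = C l * (mu q l.+1 * mu q l * ff q l.+1 l.+1).
  transitivity (Phi q l.+1 l.+1 l); first by rewrite /Phi Z4; ring.
  by rewrite E6 /Phi Z4 subnn expr0; ring.
have Cl := mulIf (mulf_neq0 (mulf_neq0 Hml1 Hml) Hf1) H6.
have E7 := EQ 0 (leq0n _); rewrite SUM in E7.
have H7 : 1 * (mu q l.+1 * mu q l * q i2 i1 ^+ l * (1 + q i2 i2))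
    = (C l * q i2 i1) * (mu q l.+1 * mu q l * q i2 i1 ^+ l * (1 + q i2 i2)).
  transitivity (Phi q 0 l.+1 l); first by rewrite /Phi /= !subn0 !expr0; ring.
  by rewrite E7 /Phi /= !subn0 !expr0 exprS; ring.
have hp' : 1 + q i2 i2 != 0 by rewrite addrC.
have Cq := mulIf (mulf_neq0 (mulf_neq0 (mulf_neq0 Hml1 Hml) (expf_neq0 l hq21)) hp') H7.
have Ceq : q i1 i1 ^+ (l * l.+1) * q i1 i2 ^+ l.+1 * q i2 i1 ^+ l * q i2 i2 = C l.
  by rewrite -Cl exprMn exprM; ring.
split.
  transitivity (C l * q i2 i1); last by rewrite -Cq.
  rewrite -Ceq exprMn !exprS; ring.
apply/zeroB_ev => w; rewrite ev_sub ev_scale.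
case: (eqVneq (count_mem i1 w) n) => Hw.
  rewrite HS // Hiota big_cat /= big_seq1 Hnl Ceq.
  rewrite big1_seq ?add0r ?subrr // => r /andP [_ Hin]; move: Hin; rewrite mem_iota => /andP [_ Hr].
  have := S5 r Hr; move/eqP; rewrite mulf_eq0 => /orP [/eqP ->|/eqP Hm]; first by rewrite mul0r.
  by rewrite Zys // mulr0.
have Hn1 : (l.+1 + l)%N = n by rewrite /n; lia.
have Hn2 : (l + l.+1)%N = n by rewrite /n; lia.
by rewrite !deg_zero ?mulr0 ?subrr // ?Hn1 ?Hn2.
Qed.
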